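(* Let $G=(V,E)$ be a connected planar graph with a fixed representation in the plane, let $G^\dagger$ be its dual graph, $p\in(0,1)$, $q\in\mathbb N$ and $p^*=\frac{q(1-p)}{p+q(1-p)}$. Let $\tilde P_{\rm HB}$ be the transition matrix of the heat-bath dynamics for the random-cluster model on $G$ with parameters $p,q$, and $\tilde P_{\rm HB}^\dagger$ that for the random-cluster model on $G^\dagger$ with parameters $p^*,q$. Then $\lambda(\tilde P_{\rm HB})=\lambda(\tilde P_{\rm HB}^\dagger)$.
   Context: Graphs are finite, parallel edges and loops allowed. A planar representation maps vertices to distinct points of $\mathbb R^2$ and edges to simple curves joining the images of their endvertices whose interiors are disjoint from all other curves. The dual graph $G^\dagger=(V^\dagger,E^\dagger)$ has one vertex in each face of the representation and, for each $e\in E$, one dual edge $e_\dagger$ whose curve crosses the curve of $e$ and no other curve, joining the vertices of the faces on both sides of $e$. For $A\subseteq E$, $c(A)$ is the number of connected components of $(V,A)$; RC measure $\mu(A)\propto(\tfrac{p}{1-p})^{|A|}q^{c(A)}$. Heat-bath dynamics: $\tilde P_{\rm HB}(A,B)=\frac1{|E|}\sum_{e\in E}\frac{\mu(B)}{\mu(A\cup\{e\})+\mu(A\setminus\{e\})}\mathbf 1(B\setminus\{e\}=A\setminus\{e\})$. Spectral gap: $\lambda(P)=1-\max\{|\xi|:\xi\text{ eigenvalue of }P,\ \xi\neq1\}$. *)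

(* Defs.v *)
From HB Require Import structures.
From mathcomp Require Import all_boot all_order all_algebra all_fingroup.
From mathcomp Require Import classical_sets reals.
From mathcomp Require Import complex.
Set Implicit Arguments. Unset Strict Implicit. Unset Printing Implicit Defensive.
Import Order.TTheory GRing.Theory Num.Theory.
Local Open Scope ring_scope.

(* Finite multigraphs (loops and parallel edges allowed):  vertex type V,   *)
(* edge type E, and ends e = the (unordered) pair of endvertices of e.      *)
Section RandomCluster.
Variables (R : realType) (V E : finType) (ends : E -> V * V).

Definition adjA (A : {set E}) : rel V := fun x y =>
  [exists e in A, (((ends e).1 == x) && ((ends e).2 == y))
                || (((ends e).1 == y) && ((ends e).2 == x))].

Definition ncomp (A : {set E}) : nat :=
  #|[set [set y | connect (adjA A) x y] | x : V]|.

Definition rc_weight (p : R) (q : nat) (A : {set E}) : R :=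
  (p / (1 - p)) ^+ #|A| * (q%:R) ^+ (ncomp A).

Definition rc_mu (p : R) (q : nat) (A : {set E}) : R :=
  rc_weight p q A / \sum_(B : {set E}) rc_weight p q B.

Definition hb (p : R) (q : nat) (A B : {set E}) : R :=
  (#|E|%:R)^-1 * \sum_(e : E)
     (if B :\ e == A :\ e then
        rc_mu p q B / (rc_mu p q (e |: A) + rc_mu p q (A :\ e))
      else 0).

Definition hb_mx (p : R) (q : nat) : 'M[R]_#|{set E}| :=
  \matrix_(i, j) hb p q (enum_val i) (enum_val j).

End RandomCluster.

Definition eigenvalues (R : realType) (n : nat) (M : 'M[R]_n) : set R[i] :=
  [set z | eigenvalue (map_mx (fun x : R => (x%:C)%C) M) z].

Definition spectral_gap (R : realType) (n : nat) (M : 'M[R]_n) : R :=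
  1 - sup [set ComplexField.Normc.normc z | z in [set z | eigenvalues M z /\ z <> 1]].

(* Planar representations as combinatorial maps.  Darts are E * bool, the  *)
(* two half-edges of e being (e,false) and (e,true); alpha exchanges them;  *)
(* sigma is the rotation system (cyclic order of the darts around each      *)
(* vertex); vertices are sigma-orbits, faces are orbits of phi = sigma o    *)
(* alpha.  The map is an embedding in the sphere/plane iff (for a connected *)
(* graph) Euler's formula  #V - #E + #F = 2  holds.                          *)
Section Maps.
Variable E : finType.

Definition flipd (d : E * bool) : E * bool := (d.1, ~~ d.2).
Lemma flipd_inj : injective flipd.
Proof. by apply: (can_inj (g := flipd)) => -[e b]; rewrite /flipd /= negbK. Qed.
Definition alpha : {perm E * bool} := perm flipd_inj.

Definition orb (T : finType) (s : {perm T}) := {X : {set T} | X \in porbits s}.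
Lemma orb_mem (T : finType) (s : {perm T}) (d : T) : porbit s d \in porbits s.
Proof. exact: imset_f. Qed.
Definition orb_of (T : finType) (s : {perm T}) (d : T) : orb s :=
  exist _ (porbit s d) (orb_mem s d).

Variable sigma : {perm E * bool}.

(* face permutation phi = sigma o alpha  (permM : (s * t) x = t (s x)) *)
Definition phi : {perm E * bool} := (alpha * sigma)%g.

Definition G_ends (e : E) : orb sigma * orb sigma :=
  (orb_of sigma (e, false), orb_of sigma (e, true)).

Definition dual_ends (e : E) : orb phi * orb phi :=
  (orb_of phi (e, false), orb_of phi (e, true)).

Definition map_connected : Prop := ncomp G_ends [set: E] = 1%N.

Definition map_planar : Prop :=
  (#|porbits sigma|%:Z - #|E|%:Z + #|porbits phi|%:Z = 2)%R.

End Maps.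

(* Main.v *)
Require Import Defs.
From HB Require Import structures.
From mathcomp Require Import all_boot all_order all_algebra all_fingroup.
From mathcomp Require Import classical_sets reals.
From mathcomp Require Import complex.
From mathcomp Require Import zify ring.
Set Implicit Arguments. Unset Strict Implicit. Unset Printing Implicit Defensive.
Import Order.TTheory GRing.Theory Num.Theory.

Section Graph.
Variables (V E : finType) (ends : E -> V * V).
Local Notation adj := (adjA ends).

Lemma adj_sym (A : {set E}) : symmetric (adj A).
Proof.
move=> x y; apply/existsP/existsP => -[e /andP[eA H]]; exists e;
  by rewrite eA /= orbC.
Qed.

Lemma conn_sym (A : {set E}) : connect_sym (adj A).
Proof. exact: sym_connect_sym (adj_sym A). Qed.

Lemma adj_ends (A : {set E}) e : e \in A -> adj A (ends e).1 (ends e).2.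
Proof. by move=> eA; apply/existsP; exists e; rewrite eA !eqxx. Qed.

Lemma adj_sub (A B : {set E}) : A \subset B -> subrel (adj A) (adj B).
Proof.
move=> AB x y /existsP[e /andP[eA H]]; apply/existsP; exists e.
by rewrite (fintype.subsetP AB _ eA).
Qed.

Lemma conn_sub (A B : {set E}) x y : A \subset B -> connect (adj A) x y -> connect (adj B) x y.
Proof.
move=> AB; apply: connect_sub => u w H; apply: connect1; exact: adj_sub H.
Qed.

Definition cl (A : {set E}) x := [set y | connect (adj A) x y].

Lemma cl_eq (A : {set E}) x y : connect (adj A) x y -> cl A x = cl A y.
Proof.
move=> H; apply/setP => z; rewrite !inE.
by apply: (same_connect (conn_sym A)).
Qed.

Lemma connect_add (A : {set E}) e x y :
  let u := (ends e).1 in let v := (ends e).2 in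
  connect (adj (e |: A)) x y =
  connect (adj A) x y ||
  ((connect (adj A) x u || connect (adj A) x v) &&
   (connect (adj A) y u || connect (adj A) y v)).
Proof.
move=> u v; have sA := conn_sym A.
have sub : A \subset e |: A by apply/fintype.subsetP => z zA; rewrite !inE zA orbT.
apply/idP/idP.
  case/connectP => p pth ->; elim: p x pth => [|z p IH] x /=.
    by rewrite connect0.
  case/andP => axz pth.
  have := IH z pth.
  set w := last z p.
  case/existsP: axz => f /andP[]; rewrite !inE => /orP[/eqP fe|fA] Hf.
    subst f; rewrite -/u -/v in Hf.
    case/orP: Hf => /andP[/eqP ex /eqP ez]; subst x z;
      case/orP => [Hzw | /andP[Hz Hw]]; apply/orP; right; rewrite ?Hw ?andbT;
      rewrite ?connect0 ?orbT //.
    all: try by rewrite sA in Hzw; rewrite Hzw ?orbT.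
  have axz : adj A x z by apply/existsP; exists f; rewrite fA.
  case/orP => [Hzw | /andP[Hz Hw]].
    by rewrite (connect_trans (connect1 axz) Hzw).
  apply/orP; right; rewrite Hw andbT.
  by case/orP: Hz => H; rewrite (connect_trans (connect1 axz) H) ?orbT.
case/orP => [H | /andP[Hx Hy]]; first exact: conn_sub H.
have euv : connect (adj (e |: A)) u v.
  by apply: connect1; apply: adj_ends; rewrite !inE eqxx.
have sA' := conn_sym (e |: A).
case/orP: Hx => Hx; case/orP: Hy => Hy; rewrite sA in Hy;
  have Hx' := conn_sub sub Hx; have Hy' := conn_sub sub Hy.
- exact: connect_trans Hx' Hy'.
- exact: connect_trans Hx' (connect_trans euv Hy').
- by apply: connect_trans Hx' _; rewrite sA' in euv; apply: connect_trans euv Hy'.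
- exact: connect_trans Hx' Hy'.
Qed.


Lemma ncompE (A : {set E}) : ncomp ends A = #|[set cl A x | x : V]|.
Proof. by []. Qed.

Lemma ncomp_add_conn (A : {set E}) e :
  connect (adj A) (ends e).1 (ends e).2 -> ncomp ends (e |: A) = ncomp ends A.
Proof.
move=> Huv; rewrite /ncomp; apply: (congr1 (fun S : {set {set V}} => #|S|)); apply: eq_imset => x.
apply/setP => y; rewrite !inE connect_add.
case: (boolP (connect (adj A) x y)) => //= Hxy.
apply/negbTE; apply/negP => /andP[Hx Hy]; apply/negP: Hxy.
have sA := conn_sym A.
have Hxu : connect (adj A) x (ends e).1.
  by case/orP: Hx => // H; rewrite sA in Huv; apply: connect_trans H Huv.
have Hyu : connect (adj A) y (ends e).1.
  by case/orP: Hy => // H; rewrite sA in Huv; apply: connect_trans H Huv.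
rewrite negbK; rewrite sA in Hyu; apply: connect_trans Hxu Hyu.
Qed.

Lemma ncomp_add_nconn (A : {set E}) e :
  ~~ connect (adj A) (ends e).1 (ends e).2 ->
  (ncomp ends (e |: A)).+1 = ncomp ends A.
Proof.
set u := (ends e).1; set v := (ends e).2 => Huv.
have sA := conn_sym A.
pose f (K : {set V}) := [set y | [exists x in K, connect (adj (e |: A)) x y]].
have fcl x : f (cl A x) = cl (e |: A) x.
  apply/setP => y; rewrite !inE; apply/existsP/idP.
    case=> z /andP[]; rewrite inE => Hxz Hzy.
    apply: connect_trans Hzy.
    apply: conn_sub Hxz; apply/fintype.subsetP => w wA; by rewrite !inE wA orbT.
  by move=> H; exists x; rewrite inE connect0.
rewrite !ncompE.
set C := [set cl A x | x : V].
have -> : [set cl (e |: A) x | x : V] = f @: C.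
  rewrite -imset_comp; apply: eq_imset => x /=; by rewrite fcl.
have clvC : cl A v \in C by apply: imset_f.
have cluv : cl A u != cl A v.
  apply/negP => /eqP H; apply/negP: Huv.
  have : v \in cl A v by rewrite inE connect0.
  by rewrite -H inE negbK; apply.
have -> : f @: C = f @: (C :\ cl A v).
  apply/setP => K; apply/imsetP/imsetP => -[K0 HK0 ->]; last first.
    by exists K0 => //; move: HK0; rewrite !inE => /andP[].
  case: (eqVneq K0 (cl A v)) => [-> | ne].
    exists (cl A u); first by rewrite !inE cluv imset_f.
    rewrite !fcl; apply: esym; apply: cl_eq; apply: connect1; apply: adj_ends.
    by rewrite !inE eqxx.
  by exists K0 => //; rewrite !inE ne.
rewrite (cardsD1 (cl A v) C) clvC add1n; congr (_.+1).
apply: card_in_imset => K1 K2; rewrite !inE => /andP[n1 /imsetP[x1 _ E1]]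
  /andP[n2 /imsetP[x2 _ E2]]; subst K1 K2; rewrite !fcl => Heq.
have : x2 \in cl (e |: A) x1 by rewrite Heq inE connect0.
rewrite inE connect_add -/u -/v => /orP[H|/andP[H1 H2]]; first exact: cl_eq.
have nv y : cl A y != cl A v -> ~~ connect (adj A) y v.
  by move=> ne; apply/negP => H; move: ne; rewrite (cl_eq H) eqxx.
have Hx1 : connect (adj A) x1 u by case/orP: H1 => // H; move: (nv _ n1); rewrite H.
have Hx2 : connect (adj A) x2 u by case/orP: H2 => // H; move: (nv _ n2); rewrite H.
apply: cl_eq; rewrite sA in Hx2; exact: connect_trans Hx1 Hx2.
Qed.

Lemma adj0 x y : adj (finset.set0 : {set E}) x y = false.
Proof. by apply/existsP => -[f]; rewrite inE. Qed.

Lemma ncomp0 : ncomp ends (finset.set0 : {set E}) = #|V|.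
Proof.
rewrite /ncomp -[in RHS](card_imset _ set1_inj); apply: (congr1 (fun S : {set {set V}} => #|S|)).
apply: eq_imset => x; apply/setP => y; rewrite !inE.
apply/idP/idP => [/connectP[[|z p] /= H ->] | /eqP <-]; rewrite ?connect0 //.
by rewrite adj0 in H.
Qed.

Lemma ncomp1P (A : {set E}) :
  ncomp ends A = 1%N -> forall x y, connect (adj A) x y.
Proof.
rewrite /ncomp => /eqP/cards1P[K HK] x y.
have hx : cl A x \in [set K] by rewrite -HK imset_f.
have hy : cl A y \in [set K] by rewrite -HK imset_f.
rewrite !inE in hx hy.
have : y \in cl A y by rewrite inE connect0.
by rewrite (eqP hy) -(eqP hx) inE.
Qed.

Lemma ncomp1I (A : {set E}) (x0 : V) :
  (forall x y, connect (adj A) x y) -> ncomp ends A = 1%N.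
Proof.
move=> H; rewrite /ncomp; apply/eqP/cards1P; exists (cl A x0).
apply/setP => K; rewrite inE; apply/imsetP/eqP => [[x _ ->]|->].
  exact: cl_eq.
by exists x0.
Qed.

End Graph.

Section Map.
Variable E : finType.
Local Notation D := (E * bool)%type.
Local Notation al := (alpha E).

Lemma alphaE (d : D) : al d = (d.1, ~~ d.2).
Proof. by rewrite /alpha permE. Qed.

Lemma alphaK (d : D) : al (al d) = d.
Proof. by case: d => e b; rewrite !alphaE /= negbK. Qed.

Lemma phiE (s : {perm D}) d : phi s d = s (al d).
Proof. by rewrite /phi permM. Qed.

Lemma orb_of_perm (s : {perm D}) d : orb_of s (s d) = orb_of s d.
Proof.
apply: val_inj => /=; have := porbit_perm s 1 d; by rewrite expg1.
Qed.

Lemma orb_of_eq (s : {perm D}) d d' :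
  orb_of s d = orb_of s d' -> exists i, d' = (s ^+ i)%g d.
Proof.
move=> H; apply/porbitP; have : val (orb_of s d) = val (orb_of s d') by rewrite H.
by move=> /= ->; exact: porbit_id.
Qed.

Lemma orb_surj (s : {perm D}) (X : orb s) : exists d, X = orb_of s d.
Proof.
case: X => X HX; case/imsetP: (HX) => d _ Xd; exists d; exact: val_inj.
Qed.

Lemma G_endsE (s : {perm D}) e :
  G_ends s e = (orb_of s (e, false), orb_of s (e, true)).
Proof. by []. Qed.

Lemma adj_dart (s : {perm D}) (A : {set E}) (d : D) :
  d.1 \in A -> adjA (G_ends s) A (orb_of s d) (orb_of s (al d)).
Proof.
case: d => e b /= eA; rewrite alphaE /=; apply/existsP; exists e.
by rewrite eA /=; case: b; rewrite !eqxx ?orbT.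
Qed.

Lemma adj_dartE (s : {perm D}) (A : {set E}) x y :
  adjA (G_ends s) A x y ->
  exists2 d : D, d.1 \in A & x = orb_of s d /\ y = orb_of s (al d).
Proof.
case/existsP => e /andP[eA]; rewrite G_endsE /=.
case/orP => /andP[/eqP <- /eqP <-].
  by exists (e, false); rewrite ?alphaE.
by exists (e, true); rewrite ?alphaE.
Qed.

Variable sigma : {perm D}.
Local Notation vert := (orb_of sigma).
Local Notation face := (orb_of (phi sigma)).
Local Notation G := (G_ends sigma).
Local Notation Dl := (dual_ends sigma).

Lemma vert_phi d : vert (phi sigma d) = vert (al d).
Proof. by rewrite phiE orb_of_perm. Qed.

Lemma face_phi d : face (phi sigma d) = face d.
Proof. exact: orb_of_perm. Qed.

Lemma parity (A : {set E}) e :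
  ~~ connect (adjA G A) (vert (e, false)) (vert (e, true)) ->
  connect (adjA Dl (~: A :\ e)) (face (e, false)) (face (e, true)).
Proof.
move=> Huv; apply/negPn/negP => Hf.
set T := ~: A :\ e.
pose inn (d : D) := connect (adjA G A) (vert (e, false)) (vert d).
pose X (d : D) := connect (adjA Dl T) (face (e, false)) (face d).
have symT := conn_sym Dl T.
have key : \sum_(d : D) (X d && inn d && ~~ inn (al d)) =
           \sum_(d : D) (X d && ~~ inn d && inn (al d)).
  have h1 : \sum_(d : D) (X d && inn d) = \sum_(d : D) (X d && inn (al d)).
    rewrite (reindex_inj (@perm_inj _ (phi sigma))) /=.
    apply: eq_bigr => d _; by rewrite /X /inn face_phi vert_phi.
  have h2 : \sum_(d : D) (X d && inn d) = \sum_(d : D) (X d && inn d && inn (al d))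
            + \sum_(d : D) (X d && inn d && ~~ inn (al d)).
    rewrite -big_split /=; apply: eq_bigr => d _.
    by case: (X d); case: (inn d); case: (inn (al d)).
  have h3 : \sum_(d : D) (X d && inn (al d)) = \sum_(d : D) (X d && inn d && inn (al d))
            + \sum_(d : D) (X d && ~~ inn d && inn (al d)).
    rewrite -big_split /=; apply: eq_bigr => d _.
    by case: (X d); case: (inn d); case: (inn (al d)).
  by apply/eqP; rewrite -(eqn_add2l (\sum_(d : D) (X d && inn d && inn (al d)))) -h2 -h3 h1.
have key2 : \sum_(d : D) (X d && ~~ inn d && inn (al d)) =
            \sum_(d : D) (X (al d) && inn d && ~~ inn (al d)).
  rewrite (reindex_inj (@perm_inj _ al)) /=.
  apply: eq_bigr => d _; rewrite alphaK.
  by case: (X (al d)); case: (inn d); case: (inn (al d)).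
rewrite key2 in key.
have in0 : inn (e, false) by rewrite /inn connect0.
have in1 : inn (al (e, false)) = false by rewrite alphaE /=; apply/negbTE.
rewrite (bigD1 (e, false)) //= in key. rewrite [X in _ = X](bigD1 (e, false)) //= in key. move: key. rewrite in0 in1 /=.
have -> : X (e, false) by rewrite /X connect0.
have -> : X (al (e, false)) = false by rewrite /X alphaE /=; apply/negbTE.
rewrite add1n add0n.
set L := \sum_(i | _) _; set Rr := \sum_(i | _) _.
have -> : L = Rr.
  apply: eq_bigr => d nd.
  case: (boolP (inn d && ~~ inn (al d))) => [/andP[id nid] | ]; last first.
    by move=> h; rewrite -andbA (negbTE h) andbF -andbA (negbTE h) andbF.
  rewrite id nid !andbT.
  have dT : d.1 \in T.
    rewrite /T !inE; apply/andP; split.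
      apply/negP => de; case: d nd id nid de => f b /= nd id nid /eqP ef; subst f.
      case: b nd id nid => nd id nid; last by rewrite eqxx in nd.
      by rewrite /inn in id; rewrite id in Huv.
    apply/negP => dA; move/negP: nid; apply.
    exact: connect_trans id (connect1 (adj_dart sigma dA)).
  have ad : adjA Dl T (face d) (face (al d)) by exact: (adj_dart (phi sigma) dT).
  by rewrite /X (same_connect1r symT ad).
by move=> h; apply: (n_Sn Rr); exact: esym h.
Qed.


Lemma dual_connected : map_connected sigma -> ncomp Dl [set: E] = 1%N.
Proof.
move=> Hc; have cG := ncomp1P Hc.
have [x0 _] : exists x : orb sigma, True.
  case: (pickP (fun _ : orb sigma => true)) => [x _|h]; first by exists x.
  move: Hc; rewrite /map_connected /ncomp.
  have -> : [set [set y | connect (adjA G [set: E]) x y] | x : orb sigma] = finset.set0.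
    apply/setP => K; rewrite inE; apply/imsetP => -[x]; by move: (h x).
  by rewrite cards0.
have [d0 _] := orb_surj x0.
pose Rd (d d' : D) := connect (adjA Dl [set: E]) (face d) (face d').
have sD := conn_sym Dl [set: E].
have Rtr d1 d2 d3 : Rd d1 d2 -> Rd d2 d3 -> Rd d1 d3 by exact: connect_trans.
have Ral d : Rd d (al d).
  apply: connect1; have -> : Dl = G_ends (phi sigma) by []. exact: (adj_dart (phi sigma) (finset.in_setT d.1)).
have Rsg d : Rd d (sigma d).
  have -> : sigma d = phi sigma (al d) by rewrite phiE alphaK.
  by rewrite /Rd face_phi; apply: Ral.
have Rexp i d : Rd d ((sigma ^+ i)%g d).
  elim: i => [|i IH]; first by rewrite expg0 perm1 /Rd connect0.
  by rewrite expgSr permM; eapply Rtr; [exact: IH | exact: Rsg].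
have Rv d d' : vert d = vert d' -> Rd d d'.
  by move=> /orb_of_eq[i ->]; apply: Rexp.
have Rpath x y : connect (adjA G [set: E]) x y ->
    forall d, vert d = x -> exists d', vert d' = y /\ Rd d d'.
  case/connectP => p pth ->; elim: p x pth => [|z p IH] x /=.
    by move=> _ d <-; exists d; split=> //; rewrite /Rd connect0.
  case/andP => axz pth d dx.
  case: (adj_dartE axz) => d1 _ [xd1 zd1].
  have [d' [h1 h2]] := IH z pth (al d1) (esym zd1).
  exists d'; split=> //; eapply Rtr; first exact: (Rv _ _ (etrans dx xd1)).
  by eapply Rtr; [apply: Ral | exact: h2].
apply: (ncomp1I (face d0)) => F1 F2.
have [d1 ->] := orb_surj F1; have [d2 ->] := orb_surj F2.
have [d' [h1 h2]] := Rpath _ _ (cG (vert d1) (vert d2)) d1 erefl.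
by eapply Rtr; [exact: h2 | exact: (Rv _ _ h1)].
Qed.

Definition gfun (A : {set E}) : int :=
  ((ncomp G A)%:Z + #|A|%:Z - (ncomp Dl (~: A))%:Z)%R.

Lemma gfun_step (A : {set E}) e : e \notin A -> (gfun A <= gfun (e |: A))%R.
Proof.
move=> eA; rewrite /gfun.
set T := ~: A :\ e.
have eT : e \notin T by rewrite !inE eqxx.
have CA : ~: A = e |: T.
  apply/setP => f; rewrite !inE; case: (eqVneq f e) => [->|] //=.
have CeA : ~: (e |: A) = T by apply/setP => f; rewrite !inE negb_or andbC.
rewrite CA CeA cardsU1 (negbTE eA) add1n.
have cD : (ncomp Dl T <= (ncomp Dl (e |: T)).+1)%N.
  case: (boolP (connect (adjA Dl T) (Dl e).1 (Dl e).2)) => H.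
    by rewrite (ncomp_add_conn H).
  by rewrite -(ncomp_add_nconn H).
case: (boolP (connect (adjA G A) (G e).1 (G e).2)) => H.
  rewrite (ncomp_add_conn H).
  move: cD; lia.
have Hd := parity H.
rewrite -/T in Hd.
rewrite (ncomp_add_conn Hd) -(ncomp_add_nconn H); lia.
Qed.


Lemma gfun_mono (A B : {set E}) : A \subset B -> (gfun A <= gfun B)%R.
Proof.
move=> AB; move: {2}#|B :\: A| (erefl #|B :\: A|) => n.
elim: n A AB => [|n IH] A AB hn.
  have -> : A = B; last exact: Order.POrderTheory.lexx.
  apply/eqP; rewrite finset.eqEsubset AB /=; apply/fintype.subsetP => x xB.
  apply/negPn/negP => xA; have xBA : x \in B :\: A by rewrite inE xA xB.
  have : (0 < #|B :\: A|)%N by apply/card_gt0P; exists x.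
  by rewrite hn.
have [x xBA] : exists x, x \in B :\: A.
  by apply/card_gt0P; rewrite hn.
move: (xBA); rewrite inE => /andP[xA xB].
apply: Order.POrderTheory.le_trans (gfun_step xA) _.
apply: IH.
  apply/fintype.subsetP => y; rewrite !inE => /orP[/eqP -> //|]; exact: (fintype.subsetP AB).
have : #|B :\: A| = (#|B :\: (x |: A)|).+1.
  rewrite (cardsD1 x (B :\: A)) xBA add1n; congr (_.+1); apply: eq_card => y.
  by rewrite !inE negb_or andbA.
by rewrite hn => -[->].
Qed.

Lemma card_orb (s : {perm D}) : #|{: orb s}| = #|porbits s|.
Proof. by rewrite card_sig; apply: eq_card. Qed.

Lemma gfun_const : map_connected sigma -> map_planar sigma ->
  forall A, gfun A = (#|porbits sigma|%:Z - 1)%R.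
Proof.
move=> Hc Hp A.
have g0 : gfun finset.set0 = (#|porbits sigma|%:Z - 1)%R.
  rewrite /gfun ncomp0 finset.setC0 (dual_connected Hc) cards0 card_orb; lia.
have gT : gfun [set: E] = (#|porbits sigma|%:Z - 1)%R.
  rewrite /gfun Hc finset.setCT ncomp0 cardsT card_orb.
  move: Hp; rewrite /map_planar; lia.
apply/eqP; rewrite Order.POrderTheory.eq_le; apply/andP; split.
  rewrite -gT; apply: gfun_mono; exact: finset.subsetT.
rewrite -g0; apply: gfun_mono; exact: finset.sub0set.
Qed.

End Map.

Local Open Scope ring_scope.

Section Real.
Variables (R : realType) (E : finType) (sigma : {perm E * bool}) (p : R) (q : nat).
Hypotheses (Hc : map_connected sigma) (Hp : map_planar sigma)
  (p0 : 0 < p) (p1 : p < 1) (q0 : (0 < q)%N).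
Let pstar := q%:R * (1 - p) / (p + q%:R * (1 - p)).
Let a := p / (1 - p).
Let r := pstar / (1 - pstar).
Local Notation G := (G_ends sigma).
Local Notation Dl := (dual_ends sigma).

Lemma ra : r * a = q%:R.
Proof.
have hq : 0 < q%:R :> R by rewrite ltr0n.
have h1 : 1 - p != 0 by rewrite subr_eq0 gt_eqF.
have h2 : p != 0 by rewrite gt_eqF.
have h3 : p + q%:R * (1 - p) != 0.
  by rewrite gt_eqF // addr_gt0 // mulr_gt0 // subr_gt0.
have h4 : 1 - pstar = p / (p + q%:R * (1 - p)).
  rewrite /pstar; field; exact: h3.
rewrite /r /a h4 /pstar; field.
by rewrite h1 h2 h3.
Qed.

Lemma count_rel (A : {set E}) :
  (ncomp Dl (~: A) + #|porbits sigma| = ncomp G A + #|A| + 1)%N.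
Proof. have := gfun_const Hc Hp A; rewrite /gfun; lia. Qed.

End Real.
Section Real2.
Variables (R : realType) (E : finType) (sigma : {perm E * bool}) (p : R) (q : nat).
Hypotheses (Hc : map_connected sigma) (Hp : map_planar sigma)
  (p0 : 0 < p) (p1 : p < 1) (q0 : (0 < q)%N).
Let pstar := q%:R * (1 - p) / (p + q%:R * (1 - p)).
Let a := p / (1 - p).
Let r := pstar / (1 - pstar).
Local Notation G := (G_ends sigma).
Local Notation Dl := (dual_ends sigma).

Lemma weight_rel (A : {set E}) :
  rc_weight Dl pstar q (~: A) * (a ^+ #|E| * q%:R ^+ #|porbits sigma|)
  = rc_weight G p q A * q%:R ^+ (#|E| + 1).
Proof.
rewrite /rc_weight -/a -/r.
rewrite -(cardsC A) !exprD.
set m := #|A|; set k := #|~: A|.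
have hc := @count_rel R E sigma p q Hc Hp p0 p1 q0 A.
set cD := ncomp Dl (~: A) in hc *; set cG := ncomp G A in hc *.
set nV := #|porbits sigma| in hc *.
have e : q%:R ^+ cD * q%:R ^+ nV = q%:R ^+ cG * q%:R ^+ m * q%:R ^+ 1 :> R.
  by rewrite -!exprD hc.
have ra' := @ra R p q p0 p1 q0; rewrite -/a -/r in ra'.
transitivity ((r ^+ k * a ^+ k) * a ^+ m * (q%:R ^+ cD * q%:R ^+ nV)).
  move: (r ^+ k) (a ^+ k) (a ^+ m) (q%:R ^+ cD) (q%:R ^+ nV) => x1 x2 x3 x4 x5.
  ring.
rewrite -exprMn ra' e.
move: (q%:R ^+ k) (a ^+ m) (q%:R ^+ cG) (q%:R ^+ m) (q%:R ^+ 1) => x1 x2 x3 x4 x5.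
ring.
Qed.

Lemma divMM (x y c : R) : c != 0 -> (x * c) / (y * c) = x / y.
Proof. by move=> hc; rewrite invfM mulrACA divff // mulr1. Qed.

Lemma mu_rel (A : {set E}) : rc_mu Dl pstar q (~: A) = rc_mu G p q A.
Proof.
have hq : q%:R != 0 :> R by rewrite pnatr_eq0 -lt0n.
have ha : a != 0.
  by rewrite /a mulf_neq0 ?invr_eq0 // ?gt_eqF // subr_gt0.
set W := a ^+ #|E| * q%:R ^+ #|porbits sigma|.
have hW : W != 0 by rewrite mulf_neq0 // expf_neq0.
set c := q%:R ^+ (#|E| + 1) / W.
have hc : c != 0 by rewrite mulf_neq0 ?invr_eq0 // expf_neq0.
have wr B : rc_weight Dl pstar q (~: B) = rc_weight G p q B * c.
  apply: (mulIf hW); rewrite weight_rel /c. by rewrite -[RHS]mulrA (divfK hW).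
rewrite /rc_mu wr.
have -> : \sum_(B : {set E}) rc_weight Dl pstar q B
        = (\sum_(B : {set E}) rc_weight G p q B) * c.
  rewrite (reindex_inj (@finset.setC_inj E)) /= mulr_suml.
  by apply: eq_bigr => B _; rewrite wr.
exact: divMM.
Qed.

Lemma setU1_eq (A B : {set E}) e : (e |: B == e |: A) = (B :\ e == A :\ e).
Proof.
apply/eqP/eqP => H; apply/setP => x; move/setP: H => /(_ x); rewrite !inE;
  by case: (x == e).
Qed.

Lemma hb_rel (A B : {set E}) : hb Dl pstar q (~: A) (~: B) = hb G p q A B.
Proof.
rewrite /hb; congr (_ * _); apply: eq_bigr => e _.
have h1 : ~: B :\ e = ~: (e |: B) by apply/setP => x; rewrite !inE negb_or andbC.
have h2 : ~: A :\ e = ~: (e |: A) by apply/setP => x; rewrite !inE negb_or andbC.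
have h3 : e |: ~: A = ~: (A :\ e).
  by apply/setP => x; rewrite !inE negb_and negbK.
rewrite h1 h2 h3 (inj_eq (@finset.setC_inj E)) setU1_eq !mu_rel.
by rewrite addrC.
Qed.

End Real2.

Lemma eig_conj (F : fieldType) n (N P Q : 'M[F]_n) a :
  P *m Q = 1%:M -> Q *m P = 1%:M -> eigenvalue (P *m N *m Q) a -> eigenvalue N a.
Proof.
move=> PQ QP /eigenvalueP[v Hv v0]; apply/eigenvalueP; exists (v *m P).
  have : v *m (P *m N *m Q) *m P = a *: v *m P by rewrite Hv.
  by rewrite -scalemxAl !mulmxA -!(mulmxA _ Q) QP !mulmx1.
apply: contraNneq v0 => h.
by rewrite -[v]mulmx1 -PQ mulmxA h mul0mx.
Qed.

Lemma eig_perm (F : fieldType) n (N : 'M[F]_n) (s : {perm 'I_n}) a :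
  eigenvalue (col_perm s (row_perm s N)) a = eigenvalue N a.
Proof.
rewrite col_permE row_permE.
have PQ : perm_mx s *m perm_mx s^-1 = 1%:M :> 'M[F]_n by rewrite -perm_mxM mulgV perm_mx1.
have QP : perm_mx s^-1 *m perm_mx s = 1%:M :> 'M[F]_n by rewrite -perm_mxM mulVg perm_mx1.
apply/idP/idP; first exact: eig_conj.
move=> H; apply: (eig_conj QP PQ).
by rewrite !mulmxA QP mul1mx -mulmxA QP mulmx1.
Qed.

Theorem lemma5p5 (R : realType) (E : finType) (sigma : {perm E * bool})
    (p : R) (q : nat) :
  map_connected sigma -> map_planar sigma ->
  0 < p < 1 -> (0 < q)%N ->
  let pstar := q%:R * (1 - p) / (p + q%:R * (1 - p)) in
  spectral_gap (hb_mx (G_ends sigma) p q)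
  = spectral_gap (hb_mx (dual_ends sigma) pstar q).
Proof.
move=> Hc Hp /andP[p0 p1] q0 pstar.
set n := #|{set E}|.
pose f (i : 'I_n) : 'I_n := enum_rank (~: (enum_val i)).
have finj : injective f.
  move=> i j /(congr1 enum_val); rewrite /f !enum_rankK => /finset.setC_inj.
  exact: enum_val_inj.
pose s := perm finj.
have HM : hb_mx (dual_ends sigma) pstar q
          = col_perm s (row_perm s (hb_mx (G_ends sigma) p q)).
  apply/matrixP => i j; rewrite !mxE !permE /f !enum_rankK.
  rewrite -(hb_rel Hc Hp p0 p1 q0) !finset.setCK //.
have HE : eigenvalues (hb_mx (dual_ends sigma) pstar q)
          = eigenvalues (hb_mx (G_ends sigma) p q).
  rewrite /eigenvalues HM; apply: boolp.funext => z.
  have -> : map_mx (fun x : R => (x%:C)%C) (col_perm s (row_perm s (hb_mx (G_ends sigma) p q)))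
     = col_perm s (row_perm s (map_mx (fun x : R => (x%:C)%C) (hb_mx (G_ends sigma) p q))).
    by apply/matrixP => i j; rewrite !mxE.
  by rewrite /mkset eig_perm.
by rewrite /spectral_gap HE.
Qed.
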